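(* Suppose $f(i,y,z)$ is convex in $(y,z)$. For $i=0,\ldots,n-1$, $\omega\in\Omega$, $z\in\mathbb R^D$, define the convex conjugate in $y$, $$f^{\#y}(\omega,i,r,z)=\sup_{y\in\mathbb R}\{ry-f(\omega,i,y,z)\},$$ with effective domain $D^{(i,\omega,z)}_{f^{\#y}}=\{r\in\mathbb R: f^{\#y}(\omega,i,r,z)<\infty\}$; this domain is contained in $[-\alpha^{(0)}_i(\omega),\alpha^{(0)}_i(\omega)]$. Then for every $(M^0,M)\in\mathcal M_{1+D}$ and $i=0,\ldots,n-1$, $$\theta^{up}_i=\max\Big\{S_i,\;\sup_{r\in D^{(i,\omega,z^{up}_i(\omega))}_{f^{\#y}}}\frac{1}{1-r\Delta_i}\Big(\theta^{up}_{i+1}-(M^0_{i+1}-M^0_i)-f^{\#y}(i,r,z^{up}_i)\Delta_i\Big)\Big\},$$ where $\theta^{up}=\theta^{up}(M^0,M)$ and $z^{up}_i=\beta_{i+1}\theta^{up}_{i+1}-(M_{i+1}-M_i)$.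
   Context: Standing setting: $n\ge 1$ and $D\ge 1$ are integers; $(\Omega,\mathcal F,(\mathcal F_i)_{i=0,\ldots,n},P)$ is a filtered probability space and $E_i[\cdot]=E[\cdot\mid\mathcal F_i]$. The constants $\Delta_0,\ldots,\Delta_{n-1}$ are positive reals. $S=(S_i)_{i=0,\ldots,n}$ is an adapted process with values in $\mathbb R\cup\{-\infty\}$, $S_n$ real-valued, with $\sum_{i=0}^{n-1}E[|S_i\mathbf 1_{\{S_i>-\infty\}}|]+E[|S_n|]<\infty$. The random field $f:\Omega\times\{0,\ldots,n-1\}\times\mathbb R\times\mathbb R^D\to\mathbb R$ is measurable, $f(\cdot,i,y,z)$ is $\mathcal F_i$-measurable for every $(y,z)$ (the dependence on $\omega$ is suppressed), $\sum_{i=0}^{n-1}E[|f(i,0,0)|]<\infty$, and there are adapted nonnegative processes $\alpha^{(0)},\ldots,\alpha^{(D)}$ with $|f(i,y,z)-f(i,y',z')|\le\alpha^{(0)}_i|y-y'|+\sum_{d=1}^D\alpha^{(d)}_i|z_d-z'_d|$ for all $(y,z),(y',z')\in\mathbb R\times\mathbb R^D$. $\beta=(\beta_i)_{i=1,\ldots,n}$ is a bounded adapted $\mathbb R^D$-valued process, and for $i=0,\ldots,n-1$ almost surely $\alpha^{(0)}_i<1/\Delta_i$ and $\sum_{d=1}^D\alpha^{(d)}_i|\beta_{d,i+1}|\le 1/\Delta_i$. $\mathcal M_{1+D}$ is the set of pairs $(M^0,M)$ where $M^0$ is a real-valued martingale and $M=(M_1,\ldots,M_D)$ an $\mathbb R^D$-valued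 martingale with $\sum_{d=1}^D\sum_{i=0}^{n-1}E[\alpha^{(d)}_i|M_{d,i+1}-M_{d,i}|]\Delta_i<\infty$. For $(M^0,M)\in\mathcal M_{1+D}$, the (non-adapted) process $\theta^{up}=\theta^{up}(M^0,M)$ is defined pathwise by $\theta^{up}_n=S_n$ and, for $i=n-1,\ldots,0$, as the unique solution (it exists since $\alpha^{(0)}_i\Delta_i<1$) of $$\theta^{up}_i=\max\{S_i,\;\theta^{up}_{i+1}-(M^0_{i+1}-M^0_i)+f(i,\theta^{up}_i,\beta_{i+1}\theta^{up}_{i+1}-(M_{i+1}-M_i))\Delta_i\}.$$ *)

(* Defs.v *)
From Stdlib Require Import Reals Lra Lia.
Open Scope R_scope.

(* Vectors of R^D are represented as functions nat -> R; only the components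
   0..D-1 are used (the Lipschitz hypothesis makes f independent of the others). *)
Definition vec := nat -> R.

Fixpoint sumD (D : nat) (g : nat -> R) : R :=
  match D with
  | O => 0
  | S k => sumD k g + g k
  end.

(* Values in R ∪ {-oo}: None stands for -oo. *)
Definition emax (s : option R) (x : R) : R :=
  match s with
  | None => x
  | Some a => Rmax a x
  end.

Definition convex_yz (g : R -> vec -> R) : Prop :=
  forall (t y1 y2 : R) (z1 z2 : vec), 0 <= t <= 1 ->
    g (t * y1 + (1 - t) * y2) (fun d => t * z1 d + (1 - t) * z2 d)
    <= t * g y1 z1 + (1 - t) * g y2 z2.

Definition conj_set (h : R -> R) (r : R) : R -> Prop :=
  fun v => exists y : R, v = r * y - h y.

Definition conj_val (h : R -> R) (r c : R) : Prop := is_lub (conj_set h r) c.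

(* r belongs to the effective domain of h^#, i.e. h^#(r) < +oo. *)
Definition conj_dom (h : R -> R) (r : R) : Prop := bound (conj_set h r).

(* Main.v *)
Require Import Defs.
From Stdlib Require Import Reals.
From Stdlib Require Import Lra FunctionalExtensionality.
Open Scope R_scope.

Lemma sumD_zero (D : nat) (g : nat -> R) : (forall d, g d = 0) -> sumD D g = 0.
Proof. intros Hg; induction D as [|k IH]; simpl; [reflexivity|rewrite IH, Hg; ring]. Qed.

Lemma dom_bound (h : R -> R) (a r : R)
  (Hlip : forall y y', Rabs (h y - h y') <= a * Rabs (y - y')) (Ha : 0 <= a) :
  bound (conj_set h r) -> -a <= r <= a.
Proof.
  intros [m Hm]. unfold is_upper_bound in Hm.
  set (KK := Rabs m + Rabs (h 0) + 1).
  assert (HK1 : m < KK - h 0).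
  { unfold KK. pose proof (Rle_abs m). pose proof (Rle_abs (h 0)).
    pose proof (Rabs_pos (h 0)). pose proof (Rabs_pos m).
    pose proof (Rabs_Ropp (h 0)). pose proof (Rle_abs (- h 0)). lra. }
  assert (HKp : 0 < KK) by (unfold KK; pose proof (Rabs_pos m); pose proof (Rabs_pos (h 0)); lra).
  split.
  - destruct (Rle_dec (-a) r) as [H|Hn]; [exact H|exfalso].
    assert (Hr : r + a < 0) by lra.
    set (y := KK / (r + a)).
    assert (Hy : y < 0).
    { unfold y, Rdiv. apply Rmult_pos_neg; [lra| apply Rinv_neg; lra]. }
    assert (Hya : (r + a) * y = KK) by (unfold y; field; lra).
    pose proof (Hm (r * y - h y) (ex_intro _ y eq_refl)) as H1.
    pose proof (Hlip y 0) as H2. rewrite Rminus_0_r, (Rabs_left y Hy) in H2.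
    pose proof (Rle_abs (h y - h 0)). lra.
  - destruct (Rle_dec r a) as [H|Hn]; [exact H|exfalso].
    assert (Hr : 0 < r - a) by lra.
    set (y := KK / (r - a)).
    assert (Hy : 0 < y).
    { unfold y, Rdiv. apply Rmult_lt_0_compat; [lra| apply Rinv_0_lt_compat; lra]. }
    assert (Hya : (r - a) * y = KK) by (unfold y; field; lra).
    pose proof (Hm (r * y - h y) (ex_intro _ y eq_refl)) as H1.
    pose proof (Hlip y 0) as H2. rewrite Rminus_0_r, (Rabs_right y (Rgt_ge _ _ Hy)) in H2.
    pose proof (Rle_abs (h y - h 0)). lra.
Qed.

Lemma subgrad (h : R -> R) (a y : R)
  (Hlip : forall y y', Rabs (h y - h y') <= a * Rabs (y - y'))
  (Hconv : forall t y1 y2, 0 <= t <= 1 -> h (t * y1 + (1 - t) * y2) <= t * h y1 + (1 - t) * h y2) :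
  exists r, forall u, r * (u - y) <= h u - h y.
Proof.
  set (E := fun q => exists t, 0 < t /\ q = (h y - h (y - t)) / t).
  assert (Hb : bound E).
  { exists a. intros q [t [Ht ->]].
    pose proof (Hlip y (y - t)) as H.
    replace (y - (y - t)) with t in H by ring.
    rewrite (Rabs_right t) in H by lra.
    pose proof (Rle_abs (h y - h (y - t))).
    apply Rmult_le_reg_r with t; [exact Ht|].
    replace ((h y - h (y - t)) / t * t) with (h y - h (y - t)) by (field; lra). lra. }
  assert (Hne : exists q, E q) by (exists ((h y - h (y - 1)) / 1); exists 1; split; [lra|reflexivity]).
  destruct (completeness E Hb Hne) as [r [Hub Hlub]].
  exists r. intro u.
  destruct (Rtotal_order u y) as [Hlt|[Heq|Hgt]].
  - assert (Hq : E ((h y - h u) / (y - u))).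
    { exists (y - u). split; [lra|]. replace (y - (y - u)) with u by ring. reflexivity. }
    pose proof (Hub _ Hq) as H.
    assert (Hm : (h y - h u) / (y - u) * (y - u) <= r * (y - u)).
    { apply Rmult_le_compat_r; lra. }
    replace ((h y - h u) / (y - u) * (y - u)) with (h y - h u) in Hm by (field; lra).
    lra.
  - subst. lra.
  - set (s := u - y).
    assert (Hs : 0 < s) by (unfold s; lra).
    assert (Hm : is_upper_bound E ((h u - h y) / s)).
    { intros q [t [Ht ->]].
      set (l := s / (s + t)).
      assert (Hl : 0 <= l <= 1).
      { unfold l; split.
        - apply Rmult_le_pos; [lra|left; apply Rinv_0_lt_compat; lra].
        - apply Rmult_le_reg_r with (s + t); [lra|]. unfold Rdiv.
          rewrite Rmult_assoc, Rinv_l by lra. lra. }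
      pose proof (Hconv l (y - t) u Hl) as Hc.
      replace (l * (y - t) + (1 - l) * u) with y in Hc by (unfold l, s; field; lra).
      assert (Hc2 : (s + t) * h y <= s * h (y - t) + t * h u).
      { apply Rmult_le_compat_l with (r := s + t) in Hc; [|lra].
        replace ((s + t) * (l * h (y - t) + (1 - l) * h u))
          with (s * h (y - t) + t * h u) in Hc by (unfold l; field; lra).
        exact Hc. }
      apply Rmult_le_reg_r with (s * t); [apply Rmult_lt_0_compat; lra|].
      replace ((h y - h (y - t)) / t * (s * t)) with (s * (h y - h (y - t))) by (field; lra).
      replace ((h u - h y) / s * (s * t)) with (t * (h u - h y)) by (field; lra).
      lra. }
    pose proof (Hlub _ Hm) as H.
    assert (H2 : r * s <= (h u - h y) / s * s) by (apply Rmult_le_compat_r; lra).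
    replace ((h u - h y) / s * s) with (h u - h y) in H2 by (field; lra).
    lra.
Qed.

Lemma emax_ge (S : option R) (v : R) : v <= emax S v.
Proof. destruct S; simpl; [apply Rmax_r|lra]. Qed.

Lemma core (h : R -> R) (a Dl A x : R) (S : option R)
  (Hlip : forall y y', Rabs (h y - h y') <= a * Rabs (y - y'))
  (Hconv : forall t y1 y2, 0 <= t <= 1 -> h (t * y1 + (1 - t) * y2) <= t * h y1 + (1 - t) * h y2)
  (HDl : 0 < Dl) (Ha : 0 <= a) (Had : a < / Dl)
  (Hx : x = emax S (A + h x * Dl)) :
  exists L, is_lub (fun v => exists r c, conj_dom h r /\ conj_val h r c /\
                      v = / (1 - r * Dl) * (A - c * Dl)) L /\ x = emax S L.
Proof.
  assert (HaD : a * Dl < 1).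
  { apply Rmult_lt_compat_r with (r := Dl) in Had; [|exact HDl].
    rewrite Rinv_l in Had by lra. exact Had. }
  assert (Hphi : A + h x * Dl <= x) by (rewrite Hx at 2; apply emax_ge).
  assert (Hk : forall r, conj_dom h r -> 0 < 1 - r * Dl).
  { intros r Hr. destruct (dom_bound h a r Hlip Ha Hr) as [_ Hra].
    assert (r * Dl <= a * Dl) by (apply Rmult_le_compat_r; lra). lra. }
  set (G := fun v => exists r c, conj_dom h r /\ conj_val h r c /\
                      v = / (1 - r * Dl) * (A - c * Dl)).
  assert (Hup : is_upper_bound G x).
  { intros v [r [c [Hd [Hc ->]]]].
    pose proof (Hk r Hd) as Hkr.
    destruct Hc as [Hcu _].
    assert (Hc1 : r * x - h x <= c) by (apply Hcu; exists x; reflexivity).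
    assert (Hc2 : (r * x - h x) * Dl <= c * Dl) by (apply Rmult_le_compat_r; lra).
    assert (H3 : A - c * Dl <= x * (1 - r * Dl)) by lra.
    apply Rmult_le_compat_l with (r := / (1 - r * Dl)) in H3;
      [|left; apply Rinv_0_lt_compat; exact Hkr].
    replace (/ (1 - r * Dl) * (x * (1 - r * Dl))) with x in H3 by (field; lra).
    exact H3. }
  destruct (subgrad h a x Hlip Hconv) as [r0 Hr0].
  set (c0 := r0 * x - h x).
  assert (Hcv : conj_val h r0 c0).
  { split.
    - intros v [y ->]. unfold c0. pose proof (Hr0 y). lra.
    - intros m Hm. apply Hm. exists x. reflexivity. }
  assert (Hcd : conj_dom h r0) by (exists c0; apply Hcv).
  set (g0 := / (1 - r0 * Dl) * (A - c0 * Dl)).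
  assert (Hg0 : G g0) by (exists r0, c0; split; [exact Hcd|split; [exact Hcv|reflexivity]]).
  destruct (completeness G (ex_intro _ x Hup) (ex_intro _ g0 Hg0)) as [L [HLu HLl]].
  exists L. split; [split; assumption|].
  assert (HLx : L <= x) by (apply HLl; exact Hup).
  assert (Hg0L : g0 <= L) by (apply HLu; exact Hg0).
  destruct (Req_dec (A + h x * Dl) x) as [Heq|Hne].
  - assert (Hg0x : g0 = x).
    { pose proof (Hk r0 Hcd). unfold g0, c0.
      replace A with (x - h x * Dl) by lra. field. lra. }
    assert (L = x) by lra. subst L. rewrite Heq in Hx. exact Hx.
  - destruct S as [s|]; simpl in Hx |- *; [|exfalso; lra].
    unfold Rmax in Hx. destruct (Rle_dec s (A + h x * Dl)); [exfalso; lra|].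
    rewrite Rmax_left; lra.
Qed.

Theorem proposition3p2
  (Omega : Type) (n D : nat) (Delta : nat -> R)
  (Sp : Omega -> nat -> option R)
  (f : Omega -> nat -> R -> vec -> R)
  (alpha0 : Omega -> nat -> R) (alpha : Omega -> nat -> nat -> R)
  (beta : Omega -> nat -> vec)
  (M0 : Omega -> nat -> R) (M : Omega -> nat -> vec)
  (theta : Omega -> nat -> R)
  (HDelta : forall i, (i < n)%nat -> 0 < Delta i)
  (Halpha0 : forall w i, (i < n)%nat -> 0 <= alpha0 w i)
  (Halpha : forall w i d, (i < n)%nat -> (d < D)%nat -> 0 <= alpha w i d)
  (Hlip : forall w i y y' z z', (i < n)%nat ->
     Rabs (f w i y z - f w i y' z') <=
       alpha0 w i * Rabs (y - y') + sumD D (fun d => alpha w i d * Rabs (z d - z' d)))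
  (Hbeta_bdd : exists K, forall w i d, (1 <= i <= n)%nat -> (d < D)%nat ->
     Rabs (beta w i d) <= K)
  (Hcond0 : forall w i, (i < n)%nat -> alpha0 w i < / Delta i)
  (Hcond1 : forall w i, (i < n)%nat ->
     sumD D (fun d => alpha w i d * Rabs (beta w (S i) d)) <= / Delta i)
  (Hconvex : forall w i, (i < n)%nat -> convex_yz (f w i))
  (* theta = theta^up(M0, M): the (unique) pathwise solution of the recursion *)
  (Htheta_n : forall w, Sp w n = Some (theta w n))
  (Htheta : forall w i, (i < n)%nat ->
     theta w i = emax (Sp w i)
       (theta w (S i) - (M0 w (S i) - M0 w i)
        + f w i (theta w i)
            (fun d => beta w (S i) d * theta w (S i) - (M w (S i) d - M w i d))
          * Delta i)) :
  forall w i, (i < n)%nat ->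
    let zup := fun d => beta w (S i) d * theta w (S i) - (M w (S i) d - M w i d) in
    (forall r, conj_dom (fun y => f w i y zup) r -> - alpha0 w i <= r <= alpha0 w i) /\
    exists L : R,
      is_lub (fun v => exists r c,
                 conj_dom (fun y => f w i y zup) r /\
                 conj_val (fun y => f w i y zup) r c /\
                 v = / (1 - r * Delta i) *
                     (theta w (S i) - (M0 w (S i) - M0 w i) - c * Delta i)) L /\
      theta w i = emax (Sp w i) L.
Proof.
  intros w i Hi zup.
  assert (Hl : forall y y', Rabs (f w i y zup - f w i y' zup) <= alpha0 w i * Rabs (y - y')).
  { intros y y'. pose proof (Hlip w i y y' zup zup Hi) as H.
    rewrite sumD_zero in H; [lra|]. intro d. rewrite Rminus_diag, Rabs_R0. ring. }
  assert (Hc : forall t y1 y2, 0 <= t <= 1 ->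
     f w i (t * y1 + (1 - t) * y2) zup <= t * f w i y1 zup + (1 - t) * f w i y2 zup).
  { intros t y1 y2 Ht. pose proof (Hconvex w i Hi t y1 y2 zup zup Ht) as H.
    replace (fun d => t * zup d + (1 - t) * zup d) with zup in H
      by (apply functional_extensionality; intro; ring).
    exact H. }
  split.
  - intros r Hr. apply (dom_bound (fun y => f w i y zup)); auto.
  - apply (core (fun y => f w i y zup) (alpha0 w i)); auto.
Qed.
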